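(* Let $x_1,\dots,x_n$ be fixed data, $2\le k\le n$, and $s$ a real-valued permutation-symmetric function of $k$ arguments. Let $(I_1,\dots,I_k)$ be uniformly distributed over all $k$-tuples of distinct indices in $\{1,\dots,n\}$, $X_i^*=x_{I_i}$, $s^*=s(X_1^*,\dots,X_k^* )$, $\mathcal{D}^*=\{I_1,\dots,I_k\}$, and with $\mathbb{E}_*,\mathrm{Cov}_*$ denoting expectation and covariance over this subsampling let $s_0=\mathbb{E}_*[s^*]$, $e_i=\mathbb{E}_*[s^*\mid I_1=i]$ and, for $i\ne j$, $e_{ij}=\mathbb{E}_*[s^*\mid I_1=i,I_2=j]$. For $i\ne j$ define $$w_{ij}^*=\mathbf{1}\{i,j\in\mathcal{D}^*\}-\frac{k-1}{n-1}\mathbf{1}\{i\in\mathcal{D}^*\}-\frac{k-1}{n-1}\mathbf{1}\{j\in\mathcal{D}^*\}+\frac{k(k-1)}{n(n-1)}.$$ Then $$\mathrm{Cov}_*(s^*,w_{ij}^* )=\frac{\binom{k}{2}}{\binom{n}{2}}\,(e_{ij}-e_i-e_j+s_0),$$ and consequently $$\mathrm{ps}\text{-}\mathrm{IJ}_\mathrm{U}(2):=\sum_{i<j}\mathrm{Cov}_*^2(s^*,w_{ij}^* )=\frac{\binom{k}{2}^2}{\binom{n}{2}^2}\sum_{i<j}(e_{ij}-e_i-e_j+s_0)^2.$$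
   Context: Subsampling is without replacement and conditional on the data. *)

(* Defs.v *)
From mathcomp Require Import all_boot all_order fingroup perm all_algebra.
Set Implicit Arguments. Unset Strict Implicit. Unset Printing Implicit Defensive.
Import Order.TTheory GRing.Theory Num.Theory.
Local Open Scope ring_scope.

(* A subsample
   (I_1,...,I_k) is an injective map f : 'I_k -> 'I_n; the subsampling
   distribution is uniform on all such maps (sampling without replacement,
   conditional on the data). *)
Definition Omega (n k : nat) : {set {ffun 'I_k -> 'I_n}} :=
  [set f : {ffun 'I_k -> 'I_n} | injectiveb f].

Definition avg (R : realFieldType) (n k : nat) (A : {set {ffun 'I_k -> 'I_n}})
  (Z : {ffun 'I_k -> 'I_n} -> R) : R :=
  (\sum_(f in A) Z f) / (#|A|%:R).

Definition Estar (R : realFieldType) (n k : nat) (Z : {ffun 'I_k -> 'I_n} -> R) : R :=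
  avg (Omega n k) Z.

Definition Covstar (R : realFieldType) (n k : nat) (Z W : {ffun 'I_k -> 'I_n} -> R) : R :=
  Estar (fun f => Z f * W f) - Estar Z * Estar W.

(* The positions 1 and 2 of the subsample (0-based ordinals 0 and 1), k >= 2. *)
Definition pos1 (k : nat) (hk : (2 <= k)%N) : 'I_k := Ordinal (ltnW hk).
Definition pos2 (k : nat) (hk : (2 <= k)%N) : 'I_k := Ordinal hk.

Definition sstar (T : Type) (R : realFieldType) (n k : nat) (x : 'I_n -> T)
  (s : ('I_k -> T) -> R) (f : {ffun 'I_k -> 'I_n}) : R :=
  s (fun a => x (f a)).

Definition Econd1 (R : realFieldType) (n k : nat) (hk : (2 <= k)%N) (i : 'I_n)
  (Z : {ffun 'I_k -> 'I_n} -> R) : R :=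
  avg [set f in Omega n k | f (pos1 hk) == i] Z.

Definition Econd2 (R : realFieldType) (n k : nat) (hk : (2 <= k)%N) (i j : 'I_n)
  (Z : {ffun 'I_k -> 'I_n} -> R) : R :=
  avg [set f in Omega n k | (f (pos1 hk) == i) && (f (pos2 hk) == j)] Z.

(* w_ij star; i in D-star means i \in codom f, the set {I_1,...,I_k}. *)
Definition wstar (R : realFieldType) (n k : nat) (i j : 'I_n)
  (f : {ffun 'I_k -> 'I_n}) : R :=
  ((i \in codom f) && (j \in codom f))%:R
  - (k.-1)%:R / (n.-1)%:R * (i \in codom f)%:R
  - (k.-1)%:R / (n.-1)%:R * (j \in codom f)%:R
  + (k * k.-1)%:R / (n * n.-1)%:R.

(* Main.v *)
Require Import Defs.
From mathcomp Require Import all_boot all_order fingroup perm all_algebra.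
From mathcomp Require Import ring lra.
From Stdlib Require Import FunctionalExtensionality.
Import Order.TTheory GRing.Theory Num.Theory.
Local Open Scope ring_scope.
Set Warnings "-notation-overridden -ambiguous-paths".
Set Implicit Arguments. Unset Strict Implicit. Unset Printing Implicit Defensive.

Lemma inj_perm_dom (n k : nat) (s : 'S_k) (f : {ffun 'I_k -> 'I_n}) :
  injectiveb [ffun a => f (s a)] = injectiveb f.
Proof.
apply/injectiveP/injectiveP => H a b Hab.
- apply: (@perm_inj _ s^-1%g); apply: H; rewrite !ffunE !permKV; exact: Hab.
- apply: (@perm_inj _ s); apply: H; move: Hab; rewrite !ffunE => ->; done.
Qed.

Lemma inj_perm_cod (n k : nat) (s : 'S_n) (f : {ffun 'I_k -> 'I_n}) :
  injectiveb [ffun a => s (f a)] = injectiveb f.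
Proof.
apply/injectiveP/injectiveP => H a b Hab.
- apply: H; rewrite !ffunE Hab; done.
- apply: H; move: Hab; rewrite !ffunE; exact: perm_inj.
Qed.

Lemma L1 (R : realFieldType) (n k : nat) (s : 'S_k) (F : {ffun 'I_k -> 'I_n} -> R) :
  \sum_(f in Omega n k) F f = \sum_(f in Omega n k) F [ffun a => f (s a)].
Proof.
rewrite (reindex (fun f : {ffun 'I_k -> 'I_n} => [ffun a => f (s a)])) /=.
  by apply: eq_bigl => f; rewrite !inE inj_perm_dom.
exists (fun f : {ffun 'I_k -> 'I_n} => [ffun a => f (s^-1%g a)]) => f _;
  apply/ffunP => a; rewrite !ffunE ?permKV ?permK //.
Qed.

Lemma L2 (R : realFieldType) (n k : nat) (s : 'S_n) (F : {ffun 'I_k -> 'I_n} -> R) :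
  \sum_(f in Omega n k) F f = \sum_(f in Omega n k) F [ffun a => s (f a)].
Proof.
rewrite (reindex (fun f : {ffun 'I_k -> 'I_n} => [ffun a => s (f a)])) /=.
  by apply: eq_bigl => f; rewrite !inE inj_perm_cod.
exists (fun f : {ffun 'I_k -> 'I_n} => [ffun a => s^-1%g (f a)]) => f _;
  apply/ffunP => a; rewrite !ffunE ?permKV ?permK //.
Qed.

Lemma L3 (T : finType) (a b c d : T) : a != b -> c != d ->
  exists s : {perm T}, s a = c /\ s b = d.
Proof.
move=> ab cd.
have hb : tperm a c b != c.
  by rewrite -{2}(tpermL a c) (inj_eq perm_inj) eq_sym.
exists (tperm a c * tperm (tperm a c b) d)%g; rewrite !permM !tpermL; split=> //.
by rewrite tpermD // eq_sym.
Qed.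

Lemma codom_sum (R : realFieldType) (n k : nat) (i : 'I_n) (f : {ffun 'I_k -> 'I_n}) :
  injectiveb f -> ((i \in codom f)%:R : R) = \sum_a ((f a == i)%:R : R).
Proof.
move/injectiveP => Hinj.
case: (boolP (i \in codom f)) => [/codomP [a0 ->] | Hn].
  rewrite (bigD1 a0) //= eqxx big1 ?addr0 // => b Hb.
  by rewrite (inj_eq Hinj) (negbTE Hb).
rewrite big1 // => a _; case: eqP => // Ha; case/negP: Hn; rewrite -Ha codom_f //.
Qed.

Definition symF (R : realFieldType) (n k : nat) (F : {ffun 'I_k -> 'I_n} -> R) :=
  forall (f : {ffun 'I_k -> 'I_n}) (s : 'S_k), F [ffun a => f (s a)] = F f.

Lemma C1 (R : realFieldType) (n k : nat) (p1 : 'I_k) (F : {ffun 'I_k -> 'I_n} -> R)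
  (HF : symF F) (i : 'I_n) :
  \sum_(f in Omega n k) F f * (i \in codom f)%:R =
  k%:R * \sum_(f in Omega n k) F f * (f p1 == i)%:R.
Proof.
rewrite (eq_bigr (fun f => \sum_a F f * (f a == i)%:R)); last first.
  by move=> f; rewrite inE => Hf; rewrite (codom_sum R i Hf) mulr_sumr.
rewrite exchange_big /=.
rewrite (eq_bigr (fun _ => \sum_(f in Omega n k) F f * (f p1 == i)%:R)).
  by rewrite sumr_const card_ord mulr_natl.
move=> a _; rewrite [LHS](L1 (tperm p1 a)); apply: eq_bigr => f _.
by rewrite HF ffunE tpermR.
Qed.

Lemma C2 (R : realFieldType) (n k : nat) (p1 p2 : 'I_k) (F : {ffun 'I_k -> 'I_n} -> R)
  (HF : symF F) (p12 : p1 != p2) (i j : 'I_n) (ij : i != j) :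
  \sum_(f in Omega n k) F f * ((i \in codom f) && (j \in codom f))%:R =
  (k * k.-1)%:R * \sum_(f in Omega n k) F f * ((f p1 == i) && (f p2 == j))%:R.
Proof.
rewrite (eq_bigr (fun f => \sum_a \sum_(b | b != a) F f * ((f a == i) && (f b == j))%:R)); last first.
  move=> f; rewrite inE => Hf.
  have -> : ((i \in codom f) && (j \in codom f))%:R = ((i \in codom f)%:R * (j \in codom f)%:R : R).
    by case: (i \in codom f); case: (j \in codom f); rewrite ?mulr1 ?mulr0.
  rewrite (codom_sum R i Hf) (codom_sum R j Hf) mulr_suml mulr_sumr; apply: eq_bigr => a _.
  rewrite mulr_sumr mulr_sumr (bigD1 a) //= addrC.
  have -> : ((f a == i)%:R * (f a == j)%:R : R) = 0.
    case: (f a =P i) => [->|]; last by rewrite mul0r.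
    by rewrite (negbTE ij) mulr0.
  rewrite mulr0 addr0; apply: eq_bigr => b _.
  by case: (f a == i); case: (f b == j); rewrite ?mulr1 ?mulr0.
rewrite exchange_big /=.
set G := \sum_(f in Omega n k) F f * ((f p1 == i) && (f p2 == j))%:R.
rewrite (eq_bigr (fun a => \sum_(b | b != a) G)); last first.
  move=> a _; rewrite exchange_big /=; apply: eq_bigr => b ba.
  have ba' : a != b by rewrite eq_sym.
  have [s [s1 s2]] := L3 (ba' : a != b) p12.
  rewrite [LHS](L1 s); apply: eq_bigr => f _.
  by rewrite HF !ffunE s1 s2.
under eq_bigr => a _ do rewrite sumr_const cardC1 card_ord.
by rewrite sumr_const card_ord -mulrnA mulr_natl mulnC.
Qed.

Lemma sumw (R : realFieldType) (n k : nat) (p1 p2 : 'I_k) (F : {ffun 'I_k -> 'I_n} -> R)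
  (HF : symF F) (p12 : p1 != p2) (i j : 'I_n) (ij : i != j) :
  \sum_(f in Omega n k) F f * wstar R i j f =
  (k * k.-1)%:R * \sum_(f in Omega n k) F f * ((f p1 == i) && (f p2 == j))%:R
  - (k.-1)%:R / (n.-1)%:R * (k%:R * \sum_(f in Omega n k) F f * (f p1 == i)%:R)
  - (k.-1)%:R / (n.-1)%:R * (k%:R * \sum_(f in Omega n k) F f * (f p1 == j)%:R)
  + (k * k.-1)%:R / (n * n.-1)%:R * \sum_(f in Omega n k) F f.
Proof.
rewrite -(C1 p1 HF i) -(C1 p1 HF j) -(C2 HF p12 ij).
symmetry; rewrite !mulr_sumr -!sumrB -big_split /=.
by apply: eq_bigr => f _; rewrite /wstar; ring.
Qed.

Definition cnt1 (R : realFieldType) (n k : nat) (p1 : 'I_k) (i : 'I_n) : R :=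
  \sum_(f in Omega n k) ((f p1 == i)%:R : R).
Definition cnt2 (R : realFieldType) (n k : nat) (p1 p2 : 'I_k) (i j : 'I_n) : R :=
  \sum_(f in Omega n k) (((f p1 == i) && (f p2 == j))%:R : R).

Lemma cnt1_eq (R : realFieldType) (n k : nat) (p1 : 'I_k) (i i' : 'I_n) :
  cnt1 R p1 i = cnt1 R p1 i'.
Proof.
rewrite /cnt1 [LHS](L2 (tperm i' i)); apply: eq_bigr => f _.
by rewrite ffunE -{2}(tpermL i' i) (inj_eq perm_inj).
Qed.

Lemma cnt2_eq (R : realFieldType) (n k : nat) (p1 p2 : 'I_k) (i j i' j' : 'I_n) :
  i != j -> i' != j' -> cnt2 R p1 p2 i j = cnt2 R p1 p2 i' j'.
Proof.
move=> ij ij'; have [s [s1 s2]] := L3 ij' ij.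
rewrite /cnt2 [LHS](L2 s); apply: eq_bigr => f _.
by rewrite !ffunE -s1 -s2 !(inj_eq perm_inj).
Qed.

Lemma sum_ind (R : realFieldType) (n : nat) (x : 'I_n) :
  \sum_(i : 'I_n) ((x == i)%:R : R) = 1.
Proof.
rewrite (bigD1 x) //= eqxx big1 ?addr0 // => i; rewrite eq_sym => /negbTE -> //.
Qed.

Lemma N_eq (R : realFieldType) (n k : nat) (p1 : 'I_k) (i0 : 'I_n) :
  \sum_(f in Omega n k) (1 : R) = n%:R * cnt1 R p1 i0.
Proof.
transitivity (\sum_(f in Omega n k) \sum_(i : 'I_n) ((f p1 == i)%:R : R)).
  by apply: eq_bigr => f _; rewrite sum_ind.
rewrite exchange_big /= (eq_bigr (fun _ => cnt1 R p1 i0)).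
  by rewrite sumr_const card_ord mulr_natl.
by move=> i _; exact: (cnt1_eq R p1 i i0).
Qed.

Lemma cnt1_split (R : realFieldType) (n k : nat) (p1 p2 : 'I_k) (p12 : p1 != p2)
  (i j0 : 'I_n) (ij0 : i != j0) :
  cnt1 R p1 i = (n.-1)%:R * cnt2 R p1 p2 i j0.
Proof.
transitivity (\sum_(f in Omega n k) \sum_(j : 'I_n) (((f p1 == i) && (f p2 == j))%:R : R)).
  apply: eq_bigr => f _.
  rewrite -[LHS]mulr1 -(sum_ind R (f p2)) mulr_sumr; apply: eq_bigr => j _.
  by case: (f p1 == i); case: (f p2 == j); rewrite ?mulr1 ?mulr0.
rewrite exchange_big /= (bigD1 i) //=.
have -> : \sum_(f in Omega n k) (((f p1 == i) && (f p2 == i))%:R : R) = 0.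
  rewrite big1 // => f; rewrite inE => /injectiveP Hf.
  case: (f p1 =P i) => [e1|]; last by [].
  case: (f p2 =P i) => [e2|]; last by [].
  by case/negP: p12; apply/eqP; apply: Hf; rewrite e1 e2.
rewrite add0r (eq_bigr (fun _ => cnt2 R p1 p2 i j0)).
  by rewrite sumr_const cardC1 card_ord mulr_natl.
by move=> j ji; apply: cnt2_eq; rewrite // eq_sym.
Qed.

Lemma cnt2_pos (R : realFieldType) (n k : nat) (hkn : (k <= n)%N) (p1 p2 : 'I_k) (p12 : p1 != p2)
  (i j : 'I_n) (ij : i != j) : 0 < cnt2 R p1 p2 i j.
Proof.
have w12 : widen_ord hkn p1 != widen_ord hkn p2 by [].
have [s [s1 s2]] := L3 w12 ij.
set f0 : {ffun 'I_k -> 'I_n} := [ffun a => s (widen_ord hkn a)].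
have f0in : f0 \in Omega n k.
  rewrite inE; apply/injectiveP => a b; rewrite !ffunE => /perm_inj.
  by move/(congr1 val) => /= /val_inj.
rewrite /cnt2 (bigD1 f0) //= !ffunE s1 s2 !eqxx /=.
apply: (@lt_le_trans _ _ 1); first exact: ltr01.
by rewrite lerDl sumr_ge0 // => f _; rewrite ler0n.
Qed.

Lemma sumset (R : realFieldType) (n k : nat) (P : {ffun 'I_k -> 'I_n} -> bool)
  (Z : {ffun 'I_k -> 'I_n} -> R) :
  \sum_(f in [set f in Omega n k | P f]) Z f = \sum_(f in Omega n k) Z f * (P f)%:R.
Proof.
rewrite big_mkcond [RHS]big_mkcond; apply: eq_bigr => f _; rewrite !inE.
by case: (injectiveb f); case: (P f); rewrite /= ?mulr1 ?mulr0.
Qed.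

Lemma cardset (R : realFieldType) (n k : nat) (P : {ffun 'I_k -> 'I_n} -> bool) :
  (#|[set f in Omega n k | P f]|%:R : R) = \sum_(f in Omega n k) (P f)%:R.
Proof.
transitivity (\sum_(f in [set f in Omega n k | P f]) (1 : R)); first by rewrite sumr_const.
by rewrite sumset; apply: eq_bigr => f _; rewrite mul1r.
Qed.

Lemma alg (R : realFieldType) (k n : nat) (SB SA SA' S B : R) :
  B != 0 -> (2 <= k)%N -> (2 <= n)%N ->
  let c := (k.-1)%:R / (n.-1)%:R in
  let d := (k * k.-1)%:R / (n * n.-1)%:R in
  let A := (n.-1)%:R * B in
  let N := n%:R * A in
  ((k * k.-1)%:R * SB - c * (k%:R * SA) - c * (k%:R * SA') + d * S) / N
  - S / N * (((k * k.-1)%:R * B - c * (k%:R * A) - c * (k%:R * A) + d * N) / N)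
  = ('C(k, 2))%:R / ('C(n, 2))%:R * (SB / B - SA / A - SA' / A + S / N).
Proof.
move=> B0; case: k => [|[|k]] // _; case: n => [|[|n]] // _ c d A N.
have bin2E m : ('C(m.+2, 2))%:R = ((m.+2 * m.+1)%:R / 2 : R).
  have := mul_bin_diag m.+2 1; rewrite bin1 /= => h.
  by rewrite h natrM [RHS]mulrC mulKf // pnatr_eq0.
rewrite !bin2E /N /A /c /d /= !natrM.
field.
by rewrite B0 /= -(natrD R 1 n) -(natrD R 2 n) !pnatr_eq0.
Qed.

Lemma sum_mul1 (R : realFieldType) (n k : nat) (G : {ffun 'I_k -> 'I_n} -> R) :
  \sum_(f in Omega n k) 1 * G f = \sum_(f in Omega n k) G f.
Proof. by apply: eq_bigr => f _; rewrite mul1r. Qed.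

Theorem proposition2 (R : realFieldType) (T : Type) (n k : nat)
  (hk : (2 <= k)%N) (hkn : (k <= n)%N)
  (x : 'I_n -> T) (s : ('I_k -> T) -> R)
  (s_sym : forall (g : 'I_k -> T) (sigma : 'S_k), s (fun a => g (sigma a)) = s g) :
  let sst := sstar x s in
  let s0 := Estar sst in
  let e1 := fun i => Econd1 hk i sst in
  let e2 := fun i j => Econd2 hk i j sst in
  (forall i j : 'I_n, i != j ->
     Covstar sst (wstar R i j) =
       ('C(k, 2))%:R / ('C(n, 2))%:R * (e2 i j - e1 i - e1 j + s0))
  /\
  \sum_(i : 'I_n) \sum_(j : 'I_n | (i < j)%N) (Covstar sst (wstar R i j)) ^+ 2 =
    (('C(k, 2))%:R ^+ 2 / ('C(n, 2))%:R ^+ 2) *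
      \sum_(i : 'I_n) \sum_(j : 'I_n | (i < j)%N) (e2 i j - e1 i - e1 j + s0) ^+ 2.
Proof.
move=> sst s0 e1 e2.
have p12 : pos1 hk != pos2 hk by [].
have HF : symF sst.
  move=> f sg; rewrite /sst /sstar -(s_sym (fun a => x (f a)) sg); congr s.
  by apply: functional_extensionality => a; rewrite ffunE.
have HF1 : symF (fun _ : {ffun 'I_k -> 'I_n} => (1:R)) by [].
have Nn : (2 <= n)%N := leq_trans hk hkn.
have cov : forall i j, i != j -> Covstar sst (wstar R i j) =
       ('C(k, 2))%:R / ('C(n, 2))%:R * (e2 i j - e1 i - e1 j + s0).
  move=> i j ij.
  have ji : j != i by rewrite eq_sym.
  have B0 : cnt2 R (pos1 hk) (pos2 hk) i j != 0 := lt0r_neq0 (cnt2_pos R hkn p12 ij).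
  have hAi : cnt1 R (pos1 hk) i = (n.-1)%:R * cnt2 R (pos1 hk) (pos2 hk) i j :=
    cnt1_split R p12 ij.
  have hAj : cnt1 R (pos1 hk) j = (n.-1)%:R * cnt2 R (pos1 hk) (pos2 hk) i j.
    by rewrite (cnt1_split R p12 ji) (cnt2_eq R (pos1 hk) (pos2 hk) ji ij).
  have hN : \sum_(f in Omega n k) (1:R) =
      n%:R * ((n.-1)%:R * cnt2 R (pos1 hk) (pos2 hk) i j).
    by rewrite (N_eq R (pos1 hk) i) hAi.
  have cardO : (#|Omega n k|%:R : R) = \sum_(f in Omega n k) 1 by rewrite sumr_const.
  have Sw := sumw HF1 p12 ij; rewrite !sum_mul1 in Sw.
  rewrite /Covstar /Estar /avg /e1 /e2 /s0 /Econd1 /Econd2 /avg !sumset !cardset cardO.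
  rewrite (sumw HF p12 ij) Sw.
  rewrite -/(cnt1 R (pos1 hk) i) -/(cnt1 R (pos1 hk) j) -/(cnt2 R (pos1 hk) (pos2 hk) i j).
  rewrite hAi hAj hN.
  rewrite /Estar /avg cardO hN.
  exact: (alg _ _ _ _ B0 hk Nn).
split => //.
rewrite mulr_sumr; apply: eq_bigr => i _; rewrite mulr_sumr; apply: eq_bigr => j ij.
have ij' : i != j by apply/eqP => e; move: ij; rewrite e ltnn.
by rewrite cov // exprMn expr_div_n.
Qed.
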